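(* Suppose $\mathit{Act}=\{a\}$. Then $\mathcal{E}_{\omega,1}'=\{A1,A2,A3,A4,V1_\omega,O1\}$ is complete for $\simeq_\omega$ over open monitors: for all monitors $m,n$, if $m\simeq_\omega n$ then $\mathcal{E}_{\omega,1}'\vdash m=n$.
   Context: Monitors: terms $m,n ::= v \mid a.m \mid m+n \mid x$ over the action set $\mathit{Act}$ and variables $x$, verdicts $v::=\mathit{end}\mid\mathit{yes}\mid\mathit{no}$. Semantics: $\xrightarrow{\alpha}$ ($\alpha\in\mathit{Act}\cup\{\tau\}$) is the least relation with $a.m\xrightarrow{a}m$; $m\xrightarrow{\alpha}m'$ implies $m+n\xrightarrow{\alpha}m'$ and $n+m\xrightarrow{\alpha}m'$; $v\xrightarrow{\alpha}v$ for verdicts $v$. Weak transitions: $m\xRightarrow{\varepsilon}m'$ iff $m(\xrightarrow{\tau})^*m'$; $m\xRightarrow{a}m'$ iff $m\xRightarrow{\varepsilon}\xrightarrow{a}\xRightarrow{\varepsilon}m'$; $m\xRightarrow{as'}m'$ ($s'\ne\varepsilon$) iff $m\xRightarrow{a}m_1\xRightarrow{s'}m'$. For closed $m$, $L_a(m)=\{s\mid m\xRightarrow{s}\mathit{yes}\}$, $L_r(m)=\{s\mid m\xRightarrow{s}\mathit{no}\}$; closed $m\simeq_\omega n$ iff $L_a(m)\cdot\mathit{Act}^\omega=L_a(n)\cdot\mathit{Act}^\omega$ and $L_r(m)\cdot\mathit{Act}^\omega=L_r(n)\cdot\mathit{Act}^\omega$; for open terms iff $\sigma(m)\simeq_\omega\sigma(n)$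 for all closed substitutions $\sigma$. $\mathcal{E}\vdash m=n$ denotes derivability by reflexivity, symmetry, transitivity, substitution and congruence for $a.\_$ and $+$. Axioms: (A1) $x+y=y+x$; (A2) $x+(y+z)=(x+y)+z$; (A3) $x+x=x$; (A4) $x+\mathit{end}=x$; ($V1_\omega$) $x=a.x$; (O1) $\mathit{yes}+\mathit{no}=\mathit{yes}+\mathit{no}+x$. *)

(* Defs.v *)
(* Monitors (regular fragment, no recursion) over an action set Act. *)
From Stdlib Require Import List.
Import ListNotations.
Set Implicit Arguments.

Section Monitors.
Variable Act : Type.

Inductive mon : Type :=
| End : mon
| Yes : mon
| No : mon
| Pre : Act -> mon -> mon
| Sum : mon -> mon -> mon
| Var : nat -> mon.

Definition is_verdict (m : mon) : Prop :=
  match m with End | Yes | No => True | _ => False end.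

(* labels alpha in Act ∪ {tau}: Some b = action b, None = tau *)
Inductive step : mon -> option Act -> mon -> Prop :=
| st_pre : forall b m, step (Pre b m) (Some b) m
| st_suml : forall m n al m', step m al m' -> step (Sum m n) al m'
| st_sumr : forall m n al m', step m al m' -> step (Sum n m) al m'
| st_verd : forall v al, is_verdict v -> step v al v.

Inductive taustar : mon -> mon -> Prop :=
| ts_refl : forall m, taustar m m
| ts_step : forall m m1 m', step m None m1 -> taustar m1 m' -> taustar m m'.

Definition weak1 (m : mon) (b : Act) (m' : mon) : Prop :=
  exists m1 m2, taustar m m1 /\ step m1 (Some b) m2 /\ taustar m2 m'.

Fixpoint weak (m : mon) (s : list Act) (m' : mon) : Prop :=
  match s with
  | [] => taustar m m'
  | [b] => weak1 m b m'
  | b :: s' => exists m1, weak1 m b m1 /\ weak m1 s' m'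
  end.

Definition La (m : mon) (s : list Act) : Prop := weak m s Yes.
Definition Lr (m : mon) (s : list Act) : Prop := weak m s No.

(* infinite traces: streams nat -> Act; s is a prefix of w *)
Definition prefix (s : list Act) (w : nat -> Act) : Prop :=
  forall i d, i < length s -> nth i s d = w i.

Definition omega_ext (L : list Act -> Prop) (w : nat -> Act) : Prop :=
  exists s, L s /\ prefix s w.

Fixpoint closed (m : mon) : Prop :=
  match m with
  | Var _ => False
  | Pre _ m => closed m
  | Sum m n => closed m /\ closed n
  | _ => True
  end.

Fixpoint subst (sg : nat -> mon) (m : mon) : mon :=
  match m with
  | Var x => sg x
  | Pre b m => Pre b (subst sg m)
  | Sum m n => Sum (subst sg m) (subst sg n)
  | v => v
  end.

Definition omega_equiv_closed (m n : mon) : Prop :=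
  (forall w, omega_ext (La m) w <-> omega_ext (La n) w) /\
  (forall w, omega_ext (Lr m) w <-> omega_ext (Lr n) w).

Definition omega_equiv (m n : mon) : Prop :=
  forall sg : nat -> mon, (forall x, closed (sg x)) ->
    omega_equiv_closed (subst sg m) (subst sg n).

(* The axiom set E'_{omega,1} = {A1,A2,A3,A4,V1_omega,O1}, for the action a;
   variables x = Var 0, y = Var 1, z = Var 2. *)
Inductive axiomE (a : Act) : mon -> mon -> Prop :=
| ax_A1 : axiomE a (Sum (Var 0) (Var 1)) (Sum (Var 1) (Var 0))
| ax_A2 : axiomE a (Sum (Var 0) (Sum (Var 1) (Var 2)))
                   (Sum (Sum (Var 0) (Var 1)) (Var 2))
| ax_A3 : axiomE a (Sum (Var 0) (Var 0)) (Var 0)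
| ax_A4 : axiomE a (Sum (Var 0) End) (Var 0)
| ax_V1 : axiomE a (Var 0) (Pre a (Var 0))
| ax_O1 : axiomE a (Sum Yes No) (Sum (Sum Yes No) (Var 0)).

Inductive derive (a : Act) : mon -> mon -> Prop :=
| d_ax : forall m n, axiomE a m n -> derive a m n
| d_refl : forall m, derive a m m
| d_sym : forall m n, derive a m n -> derive a n m
| d_trans : forall m n p, derive a m n -> derive a n p -> derive a m p
| d_subst : forall sg m n, derive a m n -> derive a (subst sg m) (subst sg n)
| d_pre : forall b m n, derive a m n -> derive a (Pre b m) (Pre b n)
| d_sum : forall m m' n n', derive a m m' -> derive a n n' ->
            derive a (Sum m n) (Sum m' n').

End Monitors.

(* Main.v *)
Require Import Defs.
From Stdlib Require Import List Classical Arith.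
Import ListNotations.

Arguments End {Act}. Arguments Yes {Act}. Arguments No {Act}. Arguments Var {Act}.

Section S.
Context {Act : Type} (a : Act).
Implicit Types (p q r m v t : mon Act) (b : Act) (l : list (mon Act)) (s : list Act).

Lemma d_comm (p q : mon Act) : derive a (Sum p q) (Sum q p).
Proof. exact (d_subst (fun i => match i with 0 => p | _ => q end) (d_ax (ax_A1 a))). Qed.
Lemma d_assoc (p q r : mon Act) : derive a (Sum p (Sum q r)) (Sum (Sum p q) r).
Proof. exact (d_subst (fun i => match i with 0 => p | 1 => q | _ => r end) (d_ax (ax_A2 a))). Qed.
Lemma d_idem (p : mon Act) : derive a (Sum p p) p.
Proof. exact (d_subst (fun _ => p) (d_ax (ax_A3 a))). Qed.
Lemma d_endr (p : mon Act) : derive a (Sum p End) p.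
Proof. exact (d_subst (fun _ => p) (d_ax (ax_A4 a))). Qed.
Lemma d_prea (p : mon Act) : derive a (Pre a p) p.
Proof. apply d_sym. exact (d_subst (fun _ => p) (d_ax (ax_V1 a))). Qed.
Lemma d_o1 (p : mon Act) : derive a (Sum (Sum Yes No) p) (Sum Yes No).
Proof. apply d_sym. exact (d_subst (fun _ => p) (d_ax (ax_O1 a))). Qed.
Lemma d_endl (p : mon Act) : derive a (Sum End p) p.
Proof. eapply d_trans; [apply d_comm|apply d_endr]. Qed.

Fixpoint atoms (m : mon Act) : list (mon Act) :=
  match m with
  | End => []
  | Yes => [Yes]
  | No => [No]
  | Var x => [Var x]
  | Pre _ m => atoms m
  | Sum m n => atoms m ++ atoms n
  end.

Fixpoint sumlist (l : list (mon Act)) : mon Act :=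
  match l with [] => End | t :: l => Sum t (sumlist l) end.

Lemma sumlist_app l1 l2 : derive a (sumlist (l1 ++ l2)) (Sum (sumlist l1) (sumlist l2)).
Proof.
  induction l1 as [|t l1 IH]; simpl.
  - apply d_sym, d_endl.
  - eapply d_trans; [apply d_sum; [apply d_refl|exact IH]|apply d_assoc].
Qed.

Lemma to_atoms (Hs : forall b : Act, b = a) m : derive a m (sumlist (atoms m)).
Proof.
  induction m; simpl.
  - apply d_refl.
  - apply d_sym, d_endr.
  - apply d_sym, d_endr.
  - rewrite (Hs a0). eapply d_trans; [apply d_prea|exact IHm].
  - eapply d_trans; [apply d_sum; eassumption|]. apply d_sym, sumlist_app.
  - apply d_sym, d_endr.
Qed.

Lemma absorb t l : In t l -> derive a (Sum t (sumlist l)) (sumlist l).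
Proof.
  induction l as [|h l IH]; simpl; intros H; [destruct H|].
  destruct H as [->|H].
  - eapply d_trans; [apply d_assoc|]. apply d_sum; [apply d_idem|apply d_refl].
  - eapply d_trans; [apply d_assoc|].
    eapply d_trans; [apply d_sum; [apply d_comm|apply d_refl]|].
    eapply d_trans; [apply d_sym, d_assoc|].
    apply d_sum; [apply d_refl|auto].
Qed.

Lemma absorb_incl l1 l2 : incl l1 l2 ->
  derive a (Sum (sumlist l1) (sumlist l2)) (sumlist l2).
Proof.
  induction l1 as [|t l1 IH]; simpl; intros H.
  - apply d_endl.
  - eapply d_trans; [apply d_sym, d_assoc|].
    eapply d_trans; [apply d_sum; [apply d_refl|apply IH; intros x Hx; apply H; simpl; auto]|].
    apply absorb. apply H. simpl; auto.
Qed.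

Lemma seteq l1 l2 : incl l1 l2 -> incl l2 l1 -> derive a (sumlist l1) (sumlist l2).
Proof.
  intros H1 H2.
  eapply d_trans; [apply d_sym, (absorb_incl _ _ H2)|].
  eapply d_trans; [apply d_comm|]. apply absorb_incl; auto.
Qed.

Lemma yesno l : In Yes l -> In No l -> derive a (sumlist l) (Sum Yes No).
Proof.
  intros H1 H2.
  eapply d_trans; [apply d_sym, (absorb_incl [Yes; No] l)|].
  - intros x Hx; simpl in Hx; destruct Hx as [<-|[<-|[]]]; auto.
  - simpl. eapply d_trans; [|apply (d_o1 (sumlist l))].
    apply d_sum; [|apply d_refl]. apply d_sum; [apply d_refl|apply d_endr].
Qed.

Lemma step_incl p al p' : step p al p' -> incl (atoms p') (atoms p).
Proof.
  induction 1; simpl; intros x Hx; try apply in_app_iff; auto.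
Qed.

Lemma taustar_incl p p' : taustar p p' -> incl (atoms p') (atoms p).
Proof.
  induction 1; [intros x; auto|]. apply step_incl in H. intros x Hx; auto.
Qed.

Lemma weak1_incl p b p' : weak1 p b p' -> incl (atoms p') (atoms p).
Proof.
  intros (m1 & m2 & H1 & H2 & H3).
  apply taustar_incl in H1; apply step_incl in H2; apply taustar_incl in H3.
  intros x Hx; auto.
Qed.

Lemma weak_incl s : forall p p', weak p s p' -> incl (atoms p') (atoms p).
Proof.
  induction s as [|b s IH]; intros p p' H.
  - apply taustar_incl; exact H.
  - destruct s as [|c s].
    + eapply weak1_incl; exact H.
    + destruct H as (m1 & Hm1 & Hw).
      apply weak1_incl in Hm1. apply IH in Hw. intros x Hx; auto.
Qed.

Lemma weak1_suml p q b p' : weak1 p b p' -> weak1 (Sum p q) b p'.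
Proof.
  intros (m1 & m2 & H1 & H2 & H3).
  inversion H1; subst.
  - exists (Sum m1 q), m2. split; [constructor|split; [constructor; auto|auto]].
  - exists m1, m2. split; [|auto]. econstructor; [constructor; eauto|auto].
Qed.
Lemma weak1_sumr p q b p' : weak1 p b p' -> weak1 (Sum q p) b p'.
Proof.
  intros (m1 & m2 & H1 & H2 & H3).
  inversion H1; subst.
  - exists (Sum q m1), m2. split; [constructor|split; [apply st_sumr; auto|auto]].
  - exists m1, m2. split; [|auto]. econstructor; [apply st_sumr; eauto|auto].
Qed.

Lemma weak_suml p q b s p' : weak p (b :: s) p' -> weak (Sum p q) (b :: s) p'.
Proof.
  destruct s; simpl. apply weak1_suml.
  intros (m1 & H1 & H2). exists m1; split; auto. apply weak1_suml; auto.
Qed.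
Lemma weak_sumr p q b s p' : weak p (b :: s) p' -> weak (Sum q p) (b :: s) p'.
Proof.
  destruct s; simpl. apply weak1_sumr.
  intros (m1 & H1 & H2). exists m1; split; auto. apply weak1_sumr; auto.
Qed.
Lemma weak_pre p b s p' : weak p s p' -> weak (Pre b p) (b :: s) p'.
Proof.
  destruct s as [|c s]; simpl; intros H.
  - exists (Pre b p), p. split; [constructor|split; [constructor|auto]].
  - exists p. split; auto. exists (Pre b p), p. split; [constructor|split; [constructor|constructor]].
Qed.

Lemma verd_reach (v : mon Act) (Hv : is_verdict v) p :
  In v (atoms p) -> exists b s, weak p (b :: s) v.
Proof.
  induction p; simpl; intros H.
  - destruct H.
  - destruct H as [<-|[]]. exists a, []. exists Yes, Yes.
    split; [constructor|split; [constructor; exact I|constructor]].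
  - destruct H as [<-|[]]. exists a, []. exists No, No.
    split; [constructor|split; [constructor; exact I|constructor]].
  - destruct (IHp H) as (b & s & Hw). exists a0, (b :: s). exact (weak_pre p a0 (b :: s) v Hw).
  - apply in_app_iff in H. destruct H as [H|H].
    + destruct (IHp1 H) as (b & s & Hw). exists b, s. apply weak_suml; auto.
    + destruct (IHp2 H) as (b & s & Hw). exists b, s. apply weak_sumr; auto.
  - destruct H as [<-|[]]. destruct Hv.
Qed.

Lemma sem_ext (Hs : forall b : Act, b = a) (v : mon Act) (Hv' : v = Yes \/ v = No) p w :
  omega_ext (fun s => weak p s v) w <-> In v (atoms p).
Proof.
  assert (Hv : is_verdict v) by (destruct Hv' as [-> | ->]; exact I).
  split.
  - intros (s & Hw & _). apply (weak_incl _ _ _ Hw). destruct Hv' as [-> | ->]; simpl; auto.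
  - intros H. destruct (verd_reach v Hv p H) as (b & s & Hw). exists (b :: s). split; auto.
    intros i d _. rewrite (Hs (nth _ _ _)), (Hs (w i)). reflexivity.
Qed.

Lemma atoms_subst (t : mon Act) (Ht : forall x, t <> Var x) sg m :
  In t (atoms (subst sg m)) <-> In t (atoms m) \/ exists x, In (Var x) (atoms m) /\ In t (atoms (sg x)).
Proof.
  induction m; simpl.
  - firstorder.
  - split; [auto|intros [H|(x & H & _)]; auto; destruct H as [H|[]]; discriminate].
  - split; [auto|intros [H|(x & H & _)]; auto; destruct H as [H|[]]; discriminate].
  - exact IHm.
  - rewrite !in_app_iff, IHm1, IHm2. split.
    + intros [[H|(x&H1&H2)]|[H|(x&H1&H2)]]; eauto 6 using in_or_app.
    + intros [[H|H]|(x&H1&H2)]; auto.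
      apply in_app_iff in H1; destruct H1; eauto.
  - split.
    + intros H. right. exists n. simpl; auto.
    + intros [[H|[]]|(x&[H1|[]]&H2)]; [exfalso; apply (Ht n); auto|].
      inversion H1; subst; auto.
Qed.

Lemma atoms_shape t m : In t (atoms m) -> t = Yes \/ t = No \/ exists x, t = Var x.
Proof.
  induction m; simpl; intros H; try (destruct H as [<-|[]]; eauto).
  - destruct H.
  - auto.
  - apply in_app_iff in H; destruct H; auto.
Qed.

End S.

Theorem mainTheorem17 (Act : Type) (a : Act) (Hsingle : forall b : Act, b = a)
  (m n : mon Act) :
  omega_equiv m n -> derive a m n.
Proof.
  intros Heq.
  assert (HYv : forall x, (@Yes Act) <> Var x) by discriminate.
  assert (HNv : forall x, (@No Act) <> Var x) by discriminate.
  assert (K : forall sg : nat -> mon Act, (forall x, closed (sg x)) ->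
     forall t, (t = Yes \/ t = No) ->
     (In t (atoms m) \/ exists x, In (Var x) (atoms m) /\ In t (atoms (sg x))) <->
     (In t (atoms n) \/ exists x, In (Var x) (atoms n) /\ In t (atoms (sg x)))).
  { intros sg Hc t Ht. destruct (Heq sg Hc) as [HA HR].
    assert (Htv : is_verdict t) by (destruct Ht as [->| ->]; exact I).
    assert (Htn : forall x, t <> Var x) by (destruct Ht as [->| ->]; discriminate).
    rewrite <- !(atoms_subst t Htn sg).
    destruct Ht as [->| ->].
    - specialize (HA (fun _ => a)). unfold La in HA.
      rewrite !(sem_ext a Hsingle Yes (or_introl eq_refl)) in HA. exact HA.
    - specialize (HR (fun _ => a)). unfold Lr in HR.
      rewrite !(sem_ext a Hsingle No (or_intror eq_refl)) in HR. exact HR. }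
  assert (K0 : forall t, (t = Yes \/ t = No) -> In t (atoms m) <-> In t (atoms n)).
  { intros t Ht. pose proof (K (fun _ => End) (fun _ => I) t Ht) as H.
    simpl in H. firstorder. }
  assert (KV : forall t x, (t = Yes \/ t = No) -> ~ In t (atoms m) ->
             (In (Var x) (atoms m) <-> In (Var x) (atoms n))).
  { intros t x Ht Hm.
    pose (sg := fun y => if Nat.eq_dec y x then t else End).
    assert (Hc : forall y, closed (sg y)).
    { intros y; unfold sg; destruct (Nat.eq_dec y x); [destruct Ht as [->| ->]|]; exact I. }
    pose proof (K sg Hc t Ht) as H.
    assert (Hn : ~ In t (atoms n)) by (rewrite <- (K0 t Ht); auto).
    assert (E : forall l : list (mon Act), (exists y, In (Var y) l /\ In t (atoms (sg y))) <-> In (Var x) l).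
    { intros l; split.
      - intros (y & H1 & H2). unfold sg in H2. destruct (Nat.eq_dec y x).
        + subst; auto.
        + destruct H2.
      - intros H1. exists x. split; auto. unfold sg. destruct (Nat.eq_dec x x); [|congruence].
        destruct Ht as [->| ->]; simpl; auto. }
    rewrite !E in H. tauto. }
  eapply d_trans; [apply (to_atoms a Hsingle)|].
  eapply d_trans; [|apply d_sym, (to_atoms a Hsingle)].
  destruct (classic (In Yes (atoms m) /\ In No (atoms m))) as [[HY HN]|Hnot].
  - eapply d_trans; [apply yesno; eauto|].
    apply d_sym, yesno; [apply (K0 Yes); auto|apply (K0 No); auto].
  - assert (Ht : exists t, (t = Yes \/ t = No) /\ ~ In t (atoms m)).
    { destruct (classic (In Yes (atoms m))); [exists No|exists Yes]; tauto. }
    destruct Ht as (t & Ht & Htm).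
    apply seteq.
    + intros u Hu. destruct (atoms_shape u m Hu) as [->|[->|(x & ->)]].
      * apply (K0 Yes); auto.
      * apply (K0 No); auto.
      * apply (KV t x Ht Htm); auto.
    + intros u Hu. destruct (atoms_shape u n Hu) as [->|[->|(x & ->)]].
      * apply (K0 Yes); auto.
      * apply (K0 No); auto.
      * apply (KV t x Ht Htm); auto.
Qed.
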